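(* Let $\alpha: I\to M$ be a unit-speed curve on an oriented surface $M\subset E^3$ with Darboux frame $\{T,V,U\}$ and curvatures $k_g,k_n,\tau_g$, with $k_n(s)\neq 0$ for all $s\in I$. Let $c_2$ be a nonzero real constant, let $\chi$ be an antiderivative of $k_g\tau_g/k_n$ on $I$, and let $$\gamma(s)=\alpha(s)-c_2e^{\chi(s)}\Big(\frac{\tau_g(s)}{k_n(s)}T(s)-V(s)\Big),$$ and assume $\gamma$ is regular. Then $\gamma$ is a general helix if and only if $\alpha$ is a helical curve on $M$.
   Context: $M$ is an oriented surface in Euclidean 3-space $E^3$ and $\alpha:I\to M$ is a unit-speed curve with arc-length parameter $s$. Its Darboux frame $\{T,V,U\}$ consists of the unit tangent $T=\alpha'$, the unit surface normal $U$ of $M$ along $\alpha$, and $V=U\times T$; it satisfies $T'=k_gV+k_nU$, $V'=-k_gT+\tau_gU$, $U'=-k_nT-\tau_gV$, where $k_g,k_n,\tau_g$ are the geodesic curvature, normal curvature and geodesic torsion. A regular curve is a general helix if its unit tangent makes a constant angle with a fixed direction. $\alpha$ is a helical curve on $M$ if $\langle T,d\rangle$ is constant for some fixed unit vector $d$. *)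

(* Defs.v *)
From Stdlib Require Import Reals.
From Coquelicot Require Import Coquelicot.
Open Scope R_scope.

Definition vec : Type := (R * R * R)%type.
Definition vx (v : vec) : R := fst (fst v).
Definition vy (v : vec) : R := snd (fst v).
Definition vz (v : vec) : R := snd v.
Definition vzero : vec := (0, 0, 0).
Definition vadd (u v : vec) : vec := (vx u + vx v, vy u + vy v, vz u + vz v).
Definition vscal (r : R) (v : vec) : vec := (r * vx v, r * vy v, r * vz v).
Definition vsub (u v : vec) : vec := vadd u (vscal (-1) v).
Definition dot (u v : vec) : R := vx u * vx v + vy u * vy v + vz u * vz v.
Definition cross (u v : vec) : vec :=
  (vy u * vz v - vz u * vy v, vz u * vx v - vx u * vz v, vx u * vy v - vy u * vx v).
Definition vnorm (v : vec) : R := sqrt (dot v v).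

Definition vderiv (f : R -> vec) (s : R) (v : vec) : Prop :=
  is_derive (fun t => vx (f t)) s (vx v) /\
  is_derive (fun t => vy (f t)) s (vy v) /\
  is_derive (fun t => vz (f t)) s (vz v).
Definition vDerive (f : R -> vec) (s : R) : vec :=
  (Derive (fun t => vx (f t)) s, Derive (fun t => vy (f t)) s, Derive (fun t => vz (f t)) s).

Definition in_I (a b : Rbar) (s : R) : Prop := Rbar_lt a s /\ Rbar_lt s b.

Definition C1_on (a b : Rbar) (f : R -> R) : Prop :=
  forall s, in_I a b s -> ex_derive f s /\ continuous (Derive f) s.

(* {T,V,U} is the Darboux frame of the unit-speed curve alpha (arc length s),
   U being the unit surface normal along alpha, with geodesic curvature kg,
   normal curvature kn and geodesic torsion tg. *)
Definition darboux_frame (a b : Rbar) (alpha T V U : R -> vec) (kg kn tg : R -> R) : Prop :=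
  forall s, in_I a b s ->
    vderiv alpha s (T s) /\
    dot (T s) (T s) = 1 /\ dot (U s) (U s) = 1 /\ dot (T s) (U s) = 0 /\
    V s = cross (U s) (T s) /\
    vderiv T s (vadd (vscal (kg s) (V s)) (vscal (kn s) (U s))) /\
    vderiv V s (vadd (vscal (- kg s) (T s)) (vscal (tg s) (U s))) /\
    vderiv U s (vadd (vscal (- kn s) (T s)) (vscal (- tg s) (V s))).

Definition regular_on (a b : Rbar) (g : R -> vec) : Prop :=
  forall s, in_I a b s -> exists v, vderiv g s v /\ v <> vzero.

Definition general_helix (a b : Rbar) (g : R -> vec) : Prop :=
  exists d : vec, vnorm d = 1 /\ exists c : R, forall s, in_I a b s ->
    dot (vscal (/ vnorm (vDerive g s)) (vDerive g s)) d = c.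

Definition helical_curve (a b : Rbar) (T : R -> vec) : Prop :=
  exists d : vec, vnorm d = 1 /\ exists c : R, forall s, in_I a b s -> dot (T s) d = c.

(* Main.v *)
Require Import Defs.
From Stdlib Require Import Reals Lra Classical.
From Coquelicot Require Import Coquelicot.
Open Scope R_scope.

Definition lamf (kg kn tg chi : R -> R) (c2 : R) (s : R) : R :=
  1 - c2 * exp (chi s) * (kg s * (1 + (tg s / kn s) * (tg s / kn s))
     + (Derive tg s * kn s - tg s * Derive kn s) / (kn s * kn s)).

Lemma comp_deriv (A Tc Vc Uc kg kn tg chi : R -> R) (c2 s : R) :
  kn s <> 0 ->
  ex_derive kn s -> ex_derive tg s ->
  is_derive chi s (kg s * tg s / kn s) ->
  is_derive A s (Tc s) ->
  is_derive Tc s (kg s * Vc s + kn s * Uc s) ->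
  is_derive Vc s (- kg s * Tc s + tg s * Uc s) ->
  is_derive (fun t => A t + -1 * (c2 * exp (chi t) * (tg t / kn t * Tc t + -1 * Vc t))) s
    (lamf kg kn tg chi c2 s * Tc s).
Proof.
  intros Hk [dk Hdk] [dt Hdt] Hc HA HT HV.
  assert (Ek : Derive kn s = dk) by (apply is_derive_unique; auto).
  assert (Et : Derive tg s = dt) by (apply is_derive_unique; auto).
  assert (Hf := is_derive_div _ _ _ _ _ Hdt Hdk Hk).
  assert (He : is_derive (fun t => exp (chi t)) s (kg s * tg s / kn s * exp (chi s))).
  { apply (is_derive_comp exp chi s (exp (chi s))). apply is_derive_exp. exact Hc. }
  assert (H1 := is_derive_scal _ _ c2 _ He).
  assert (H2 := is_derive_mult _ _ _ _ _ Hf HT (fun n m => Rmult_comm n m)).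
  assert (H3 := is_derive_scal _ _ (-1) _ HV).
  assert (H4 := is_derive_plus _ _ _ _ _ H2 H3).
  assert (H5 := is_derive_mult _ _ _ _ _ H1 H4 (fun n m => Rmult_comm n m)).
  assert (H6 := is_derive_scal _ _ (-1) _ H5).
  assert (H7 := is_derive_plus _ _ _ _ _ HA H6).
  simpl in H7. unfold plus, mult in H7; simpl in H7.
  match type of H7 with is_derive _ _ ?v => replace (lamf kg kn tg chi c2 s * Tc s) with v end.
  exact H7.
  unfold lamf; rewrite Ek, Et. field. exact Hk.
Qed.

Lemma lam_cont (a b : Rbar) (kg kn tg chi : R -> R) (c2 : R) s :
  in_I a b s ->
  C1_on a b kg -> C1_on a b kn -> C1_on a b tg ->
  kn s <> 0 -> ex_derive chi s ->
  continuity_pt (lamf kg kn tg chi c2) s.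
Proof.
  intros Hs Hg Hn Ht Hk Hc.
  destruct (Hg s Hs) as [dg _]. destruct (Hn s Hs) as [dn cn].
  destruct (Ht s Hs) as [dt ct].
  apply continuity_pt_filterlim.
  assert (Kg := ex_derive_continuous _ _ dg).
  assert (Kn := ex_derive_continuous _ _ dn).
  assert (Kt := ex_derive_continuous _ _ dt).
  assert (Kc := ex_derive_continuous _ _ Hc).
  assert (Ke : continuous (fun t => exp (chi t)) s).
  { apply (continuous_comp chi exp). exact Kc.
    apply (ex_derive_continuous (K:=R_AbsRing) (V:=R_NormedModule) exp). exists (exp (chi s)). apply is_derive_exp. }
  assert (Ki : continuous (fun t => / kn t) s) by (apply continuous_Rinv_comp; auto).
  assert (Kf : continuous (fun t => tg t / kn t) s) by (apply (continuous_mult tg (fun t => / kn t)); auto).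
  assert (Kii : continuous (fun t => / (kn t * kn t)) s).
  { apply continuous_Rinv_comp. apply (continuous_mult kn kn); auto.
    intro E; apply Hk; apply Rmult_integral in E; tauto. }
  unfold lamf.
  apply (continuous_minus (fun _ => 1) (fun t => c2 * exp (chi t) * (kg t * (1 + tg t / kn t * (tg t / kn t)) +
     (Derive tg t * kn t - tg t * Derive kn t) / (kn t * kn t)))).
  apply continuous_const.
  apply (continuous_mult (fun t => c2 * exp (chi t))).
  apply (continuous_mult (fun _ => c2)). apply continuous_const. exact Ke.
  apply (continuous_plus (fun t => kg t * (1 + tg t / kn t * (tg t / kn t)))).
  apply (continuous_mult kg). exact Kg.
  apply (continuous_plus (fun _ => 1)). apply continuous_const.
  apply (continuous_mult (fun t => tg t / kn t)); auto.
  apply (continuous_mult (fun t => Derive tg t * kn t - tg t * Derive kn t)); auto.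
  apply (continuous_minus (fun t => Derive tg t * kn t) (fun t => tg t * Derive kn t)).
  apply (continuous_mult (Derive tg)); auto.
  apply (continuous_mult tg); auto.
Qed.

Lemma in_I_conv a b x y z : in_I a b x -> in_I a b y -> x <= z <= y -> in_I a b z.
Proof.
  unfold in_I; destruct a, b; simpl; intros; lra.
Qed.

Lemma sign_const a b (f : R -> R) :
  (forall s, in_I a b s -> continuity_pt f s) ->
  (forall s, in_I a b s -> f s <> 0) ->
  (forall s, in_I a b s -> 0 < f s) \/ (forall s, in_I a b s -> f s < 0).
Proof.
  intros Hc Hn.
  destruct (classic (exists s, in_I a b s /\ 0 < f s)) as [[s0 [Hs0 Hp]]|Hno].
  - left. intros s Hs. destruct (Rlt_or_le 0 (f s)) as [|Hle]; auto.
    assert (Hneg : f s < 0) by (destruct Hle; auto; exfalso; apply (Hn s Hs); auto).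
    exfalso.
    destruct (Rlt_or_le s s0) as [Hlt|Hge].
    + destruct (Ranalysis5.IVT_interv f s s0) as [z [Hz Hfz]]; auto.
      intros x Hx. apply Hc. apply (in_I_conv a b s s0); auto.
      apply (Hn z). apply (in_I_conv a b s s0); auto. auto.
    + destruct Hge as [Hgt|Heq]; [|subst; lra].
      destruct (Ranalysis5.IVT_interv (fun t => - f t) s0 s) as [z [Hz Hfz]]; auto.
      intros x Hx. apply continuity_pt_opp. apply Hc. apply (in_I_conv a b s0 s); auto.
      lra. lra.
      apply (Hn z). apply (in_I_conv a b s0 s); auto. lra.
  - right. intros s Hs. destruct (Rlt_or_le (f s) 0); auto.
    exfalso. destruct H. apply Hno; eauto. apply (Hn s Hs); auto.
Qed.

Lemma vec_eta (v : vec) : v = (vx v, vy v, vz v).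
Proof. destruct v as [[x y] z]; reflexivity. Qed.

Theorem theorem3p9 (a b : Rbar) (alpha T V U : R -> vec) (kg kn tg chi : R -> R) (c2 : R) :
  Rbar_lt a b ->
  darboux_frame a b alpha T V U kg kn tg ->
  C1_on a b kg -> C1_on a b kn -> C1_on a b tg ->
  (forall s, in_I a b s -> kn s <> 0) ->
  c2 <> 0 ->
  (forall s, in_I a b s -> is_derive chi s (kg s * tg s / kn s)) ->
  regular_on a b (fun s => vsub (alpha s)
      (vscal (c2 * exp (chi s)) (vsub (vscal (tg s / kn s) (T s)) (V s)))) ->
  (general_helix a b (fun s => vsub (alpha s)
      (vscal (c2 * exp (chi s)) (vsub (vscal (tg s / kn s) (T s)) (V s))))
   <-> helical_curve a b T).
Proof.
  intros Hab HF Cg Cn Ct Hk Hc2 Hchi Hreg.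
  set (g := fun s => vsub (alpha s)
      (vscal (c2 * exp (chi s)) (vsub (vscal (tg s / kn s) (T s)) (V s)))).
  set (lam := lamf kg kn tg chi c2).
  assert (D : forall s, in_I a b s -> vderiv g s (vscal (lam s) (T s))).
  { intros s Hs.
    destruct (HF s Hs) as (HA & _ & _ & _ & _ & HT & HV & _).
    destruct (Cn s Hs) as [dn _]. destruct (Ct s Hs) as [dt _].
    destruct HA as (A1 & A2 & A3). destruct HT as (T1 & T2 & T3).
    destruct HV as (V1 & V2 & V3).
    split; [|split].
    - exact (comp_deriv (fun t => vx (alpha t)) (fun t => vx (T t)) (fun t => vx (V t)) (fun t => vx (U t))
        kg kn tg chi c2 s (Hk s Hs) dn dt (Hchi s Hs) A1 T1 V1).
    - exact (comp_deriv (fun t => vy (alpha t)) (fun t => vy (T t)) (fun t => vy (V t)) (fun t => vy (U t))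
        kg kn tg chi c2 s (Hk s Hs) dn dt (Hchi s Hs) A2 T2 V2).
    - exact (comp_deriv (fun t => vz (alpha t)) (fun t => vz (T t)) (fun t => vz (V t)) (fun t => vz (U t))
        kg kn tg chi c2 s (Hk s Hs) dn dt (Hchi s Hs) A3 T3 V3). }
  assert (DD : forall s, in_I a b s -> vDerive g s = vscal (lam s) (T s)).
  { intros s Hs. destruct (D s Hs) as (D1 & D2 & D3).
    unfold vDerive. rewrite (vec_eta (vscal (lam s) (T s))).
    f_equal; [f_equal|]; apply is_derive_unique; assumption. }
  assert (NZ : forall s, in_I a b s -> lam s <> 0).
  { intros s Hs E. destruct (Hreg s Hs) as [v [Hv Hv0]].
    destruct (D s Hs) as (D1 & D2 & D3). destruct Hv as (E1 & E2 & E3).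
    apply Hv0. rewrite (vec_eta v).
    apply is_derive_unique in D1, D2, D3, E1, E2, E3.
    assert (F1 : vx v = vx (vscal (lam s) (T s))) by exact (eq_trans (eq_sym E1) D1).
    assert (F2 : vy v = vy (vscal (lam s) (T s))) by exact (eq_trans (eq_sym E2) D2).
    assert (F3 : vz v = vz (vscal (lam s) (T s))) by exact (eq_trans (eq_sym E3) D3).
    rewrite F1, F2, F3. unfold vzero, vscal, vx, vy, vz; simpl. rewrite E.
    f_equal; [f_equal|]; ring. }
  assert (CT : forall s, in_I a b s -> dot (T s) (T s) = 1).
  { intros s Hs. apply (HF s Hs). }
  assert (TAN : forall s d, in_I a b s ->
     dot (vscal (/ vnorm (vDerive g s)) (vDerive g s)) d = lam s / Rabs (lam s) * dot (T s) d).
  { intros s d Hs. rewrite (DD s Hs).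
    assert (Hn : vnorm (vscal (lam s) (T s)) = Rabs (lam s)).
    { unfold vnorm. replace (dot (vscal (lam s) (T s)) (vscal (lam s) (T s)))
        with (lam s * lam s * dot (T s) (T s)) by (unfold dot, vscal, vx, vy, vz; simpl; ring).
      rewrite CT by auto. rewrite Rmult_1_r. apply sqrt_Rsqr_abs. }
    rewrite Hn. unfold dot, vscal, vx, vy, vz; simpl. unfold Rdiv. ring. }
  assert (Hsgn : (forall s, in_I a b s -> 0 < lam s) \/ (forall s, in_I a b s -> lam s < 0)).
  { apply sign_const; auto. intros s Hs. apply lam_cont with a b; auto.
    exists (kg s * tg s / kn s). auto. }
  assert (SG : exists e, (e = 1 \/ e = -1) /\ forall s, in_I a b s -> lam s / Rabs (lam s) = e).
  { destruct Hsgn as [P|N].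
    - exists 1. split; auto. intros s Hs. specialize (P s Hs).
      rewrite Rabs_right by lra. field. lra.
    - exists (-1). split; auto. intros s Hs. specialize (N s Hs).
      rewrite Rabs_left by lra. field. lra. }
  destruct SG as [e [He Hes]].
  unfold general_helix, helical_curve. fold g.
  split.
  - intros [d [Hd [c Hc]]]. exists d. split; auto. exists (c / e). intros s Hs.
    specialize (Hc s Hs). rewrite TAN, Hes in Hc by auto. rewrite <- Hc.
    field. destruct He; lra.
  - intros [d [Hd [c Hc]]]. exists d. split; auto. exists (e * c). intros s Hs.
    rewrite TAN, Hes, Hc by auto. reflexivity.
Qed.
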